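(* For all $n\ge 0$, the quadruples of statistics $(\operatorname{asc},\operatorname{des},\operatorname{MNA},\operatorname{MND})$ and $(\operatorname{des},\operatorname{asc},\operatorname{MND},\operatorname{MNA})$ are equidistributed on $S_n(213,312)$, i.e. $$\sum_{\pi\in S_n(213,312)} t_1^{\operatorname{asc}(\pi)}t_2^{\operatorname{des}(\pi)}t_3^{\operatorname{MNA}(\pi)}t_4^{\operatorname{MND}(\pi)}=\sum_{\pi\in S_n(213,312)} t_1^{\operatorname{des}(\pi)}t_2^{\operatorname{asc}(\pi)}t_3^{\operatorname{MND}(\pi)}t_4^{\operatorname{MNA}(\pi)}.$$
   Context: For $n\ge 0$, $S_n$ denotes the set of permutations $\pi=\pi_1\cdots\pi_n$ of $[n]=\{1,\dots,n\}$. $\pi$ avoids a pattern $\tau\in S_k$ if no subsequence $\pi_{i_1}\cdots\pi_{i_k}$ ($i_1<\dots<i_k$) satisfies $\pi_{i_a}<\pi_{i_b}\iff\tau_a<\tau_b$; $S_n(\tau,\rho)$ is the set of permutations in $S_n$ avoiding both $\tau$ and $\rho$. $\operatorname{asc}(\pi)$ (resp. $\operatorname{des}(\pi)$) is the number of $i\in[n-1]$ with $\pi_i<\pi_{i+1}$ (resp. $\pi_i>\pi_{i+1}$). $\operatorname{MNA}(\pi)$ is the maximum size of a set $I\subseteq[n-1]$ such that $\pi_i<\pi_{i+1}$ for all $i\in I$ and $|i-j|\ge 2$ for distinct $i,j\in I$; $\operatorname{MND}(\pi)$ is defined analogously with $\pi_i>\pi_{i+1}$. *)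

(* Defs.v *)
From mathcomp Require Import all_boot all_order all_algebra all_fingroup.
Set Implicit Arguments. Unset Strict Implicit. Unset Printing Implicit Defensive.
Import GRing.Theory.

(* Permutations of [n] are modelled as 's : 'S_n' acting on 'I_n = {0,...,n-1};
   position i (0-based) holds value s i.  All statistics and pattern notions
   only depend on relative order, so this is order-isomorphic to [n]. *)

Definition contains (n : nat) (pi : 'S_n) (tau : seq nat) : bool :=
  [exists f : {ffun 'I_(size tau) -> 'I_n},
     [forall a : 'I_(size tau), forall b : 'I_(size tau),
        (a < b)%N ==> (f a < f b)%N] &&
     [forall a : 'I_(size tau), forall b : 'I_(size tau),
        ((pi (f a) < pi (f b))%N == (nth 0 tau a < nth 0 tau b)%N)]].

Definition avoids (n : nat) (pi : 'S_n) (tau : seq nat) : bool :=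
  ~~ contains pi tau.

Definition av213_312 (n : nat) : {set 'S_n} :=
  [set pi : 'S_n | avoids pi [:: 2; 1; 3] && avoids pi [:: 3; 1; 2]].

(* i (0-based) is an ascent / descent position: i+1 < n and
   pi i < pi (i+1) (resp. >). 0-based position i corresponds to i+1 in [n-1]. *)
Definition is_asc (n : nat) (pi : 'S_n) (i : 'I_n) : bool :=
  [exists j : 'I_n, (val j == i.+1) && (pi i < pi j)%N].
Definition is_des (n : nat) (pi : 'S_n) (i : 'I_n) : bool :=
  [exists j : 'I_n, (val j == i.+1) && (pi j < pi i)%N].

Definition asc (n : nat) (pi : 'S_n) : nat := #|[set i | is_asc pi i]|.
Definition des (n : nat) (pi : 'S_n) : nat := #|[set i | is_des pi i]|.

Definition nonadjacent (n : nat) (I : {set 'I_n}) : bool :=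
  [forall i in I, forall j in I, (i != j) ==> ((i.+1 < j)%N || (j.+1 < i)%N)].

Definition MNA (n : nat) (pi : 'S_n) : nat :=
  \max_(I : {set 'I_n} | [forall i in I, is_asc pi i] && nonadjacent I) #|I|.
Definition MND (n : nat) (pi : 'S_n) : nat :=
  \max_(I : {set 'I_n} | [forall i in I, is_des pi i] && nonadjacent I) #|I|.

(* Main.v *)
Require Import Defs.
From mathcomp Require Import all_boot all_order all_algebra all_fingroup.
From mathcomp Require Import zify.
Import GRing.Theory.
Set Implicit Arguments. Unset Strict Implicit. Unset Printing Implicit Defensive.

Definition rr (n : nat) : 'S_n := perm (@rev_ord_inj n).
Definition rp (n : nat) (pi : 'S_n) : 'S_n := (rr n * pi)%g.

Lemma rpE n (pi : 'S_n) i : rp pi i = pi (rev_ord i).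
Proof. by rewrite /rp permM permE. Qed.

Lemma rpK n (pi : 'S_n) : rp (rp pi) = pi.
Proof. by apply/permP => i; rewrite !rpE rev_ordK. Qed.

Definition cont (n k : nat) (pi : 'S_n) (tau : seq nat) : bool :=
  [exists f : {ffun 'I_k -> 'I_n},
     [forall a : 'I_k, forall b : 'I_k, (a < b)%N ==> (f a < f b)%N] &&
     [forall a : 'I_k, forall b : 'I_k,
        ((pi (f a) < pi (f b))%N == (nth 0 tau a < nth 0 tau b)%N)]].

Lemma cont_rev n k (pi : 'S_n) tau : size tau = k -> cont k (rp pi) tau -> cont k pi (rev tau).
Proof.
move=> sz /existsP [f /andP [/forallP Hinc /forallP Hval]].
apply/existsP; exists [ffun a => rev_ord (f (rev_ord a))]; apply/andP; split.
- apply/forallP => a; apply/forallP => b; apply/implyP => ab; rewrite !ffunE /=.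
  have := forallP (Hinc (rev_ord b)) (rev_ord a).
  have := ltn_ord a; have := ltn_ord b.
  have := ltn_ord (f (rev_ord a)); have := ltn_ord (f (rev_ord b)).
  move=> h1 h2 h3 h4 /implyP /= H; have := H ltac:(lia); move: (f (rev_ord a)) (f (rev_ord b)) => x y /=; have := ltn_ord x; have := ltn_ord y; lia.
- apply/forallP => a; apply/forallP => b; rewrite !ffunE.
  have := forallP (Hval (rev_ord a)) (rev_ord b); rewrite !rpE.
  by rewrite !nth_rev ?sz //=.
Qed.

Lemma cont_swap n k (pi : 'S_n) tau : size tau = k -> cont k (rp pi) tau = cont k pi (rev tau).
Proof.
move=> sz; apply/idP/idP; first exact: cont_rev.
move=> H; rewrite -(revK tau); apply: cont_rev; first by rewrite size_rev.
by rewrite rpK.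
Qed.

Lemma mem_rp n (pi : 'S_n) : (rp pi \in av213_312 n) = (pi \in av213_312 n).
Proof.
rewrite !inE /avoids.
have -> : contains (rp pi) [:: 2; 1; 3] = contains pi [:: 3; 1; 2]
  by exact: (@cont_swap n 3 pi [:: 2; 1; 3]).
have -> : contains (rp pi) [:: 3; 1; 2] = contains pi [:: 2; 1; 3]
  by exact: (@cont_swap n 3 pi [:: 3; 1; 2]).
by rewrite andbC.
Qed.

Lemma flP n (i : 'I_n) : (if (i.+1 < n)%N then n - i.+2 else i) < n.
Proof. have := ltn_ord i; case: ifP => _; lia. Qed.

Definition fl n (i : 'I_n) : 'I_n := Ordinal (flP i).
Arguments fl {n}.

Lemma flE n (i : 'I_n) : (i.+1 < n)%N -> val (fl i) = n - i.+2.
Proof. by move=> h; rewrite /= h. Qed.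

Lemma flK n : involutive (@fl n).
Proof.
move=> i; apply/val_inj => /=; have := ltn_ord i.
case: (ltnP i.+1 n) => h1 h2.
- have -> : ((n - i.+2).+1 < n)%N = true by lia. lia.
- by rewrite ltnNge h1.
Qed.

Lemma fl_inj n : injective (@fl n).
Proof. exact: (can_inj (@flK n)). Qed.

Lemma step_rp n (pi : 'S_n) (e : rel nat) (i : 'I_n) :
  [exists j : 'I_n, (val j == i.+1) && e (rp pi i) (rp pi j)] =
  [exists j : 'I_n, (val j == (fl i).+1) && e (pi j) (pi (fl i))].
Proof.
apply/existsP/existsP => [[j /andP [/eqP ej lt]] | [j /andP [/eqP ej lt]]].
- have hi : (i.+1 < n)%N by rewrite -ej ltn_ord.
  exists (rev_ord i); apply/andP; split.
    by rewrite /= hi; apply/eqP; lia.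
  have <- : rev_ord j = fl i by apply/val_inj; rewrite (flE hi) /= ej; lia.
  by rewrite -!rpE.
- have hi : (i.+1 < n)%N.
    case: (ltnP i.+1 n) => // h; move: ej; rewrite /= ltnNge h /=.
    have := ltn_ord j; lia.
  exists (rev_ord (fl i)); apply/andP; split.
    by rewrite /= hi; apply/eqP; have := ltn_ord i; lia.
  have ej' : rev_ord i = j by apply/val_inj; rewrite /= ej (flE hi); lia.
  by rewrite !rpE rev_ordK ej'.
Qed.

Lemma asc_rp n (pi : 'S_n) i : is_asc (rp pi) i = is_des pi (fl i).
Proof. exact: (step_rp pi (fun x y => x < y)%N). Qed.

Lemma des_rp n (pi : 'S_n) i : is_des (rp pi) i = is_asc pi (fl i).
Proof. exact: (step_rp pi (fun x y => y < x)%N). Qed.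

Lemma card_rp n (P : 'I_n -> bool) : #|[set i | P (fl i)]| = #|[set i | P i]|.
Proof.
have -> : [set i | P (fl i)] = fl @^-1: [set i | P i] by apply/setP => i; rewrite !inE.
by rewrite card_preimset //; exact: fl_inj.
Qed.

Lemma forall_imset n (I : {set 'I_n}) (P : 'I_n -> bool) :
  [forall i in fl @: I, P i] = [forall i in I, P (fl i)].
Proof.
apply/forallP/forallP => H x.
- apply/implyP => xI; have := H (fl x); by rewrite imset_f.
- apply/implyP => /imsetP [y yI ->]; exact: (implyP (H y) yI).
Qed.

Lemma nonadjacentP n (I : {set 'I_n}) :
  reflect (forall i j, i \in I -> j \in I -> i != j -> (i.+1 < j)%N || (j.+1 < i)%N)
          (nonadjacent I).
Proof.
apply: (iffP forallP) => H.
- move=> i j iI jI ij. move: (H i); rewrite iI /= => /forallP /(_ j).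
  by rewrite jI ij.
- move=> i; apply/implyP => iI; apply/forallP => j; apply/implyP => jI; apply/implyP.
  exact: H.
Qed.

Lemma nonadj_fl n (I : {set 'I_n}) : (forall i, i \in I -> (i.+1 < n)%N) ->
  nonadjacent (fl @: I) = nonadjacent I.
Proof.
move=> hI; apply/nonadjacentP/nonadjacentP => H.
- move=> i j iI jI ij.
  have ij' : fl i != fl j by rewrite (inj_eq (@fl_inj n)).
  have := H _ _ (imset_f fl iI) (imset_f fl jI) ij'.
  rewrite (flE (hI _ iI)) (flE (hI _ jI)).
  have := hI _ iI; have := hI _ jI; lia.
- move=> i j /imsetP [i' iI ->] /imsetP [j' jI ->] ij.
  have ij' : i' != j' by apply: contraNneq ij => ->.
  have := H _ _ iI jI ij'.
  rewrite (flE (hI _ iI)) (flE (hI _ jI)).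
  have := hI _ iI; have := hI _ jI; lia.
Qed.

Lemma des_lt n (pi : 'S_n) i : is_des pi i -> (i.+1 < n)%N.
Proof. by case/existsP => j /andP [/eqP <- _]; exact: ltn_ord. Qed.
Lemma asc_lt n (pi : 'S_n) i : is_asc pi i -> (i.+1 < n)%N.
Proof. by case/existsP => j /andP [/eqP <- _]; exact: ltn_ord. Qed.

Lemma MNA_rp n (pi : 'S_n) : MNA (rp pi) = MND pi.
Proof.
rewrite /MNA /MND (reindex_inj (imset_inj (@fl_inj n))) /=.
apply: eq_big => [I|I _]; last by rewrite card_imset //; exact: fl_inj.
rewrite forall_imset.
have -> : [forall i in I, is_asc (rp pi) (fl i)] = [forall i in I, is_des pi i].
  by apply: eq_forallb => i; rewrite asc_rp flK.
case E: [forall i in I, is_des pi i] => //=.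
apply: nonadj_fl => i iI; apply: (@des_lt n pi).
exact: (implyP (forallP E i) iI).
Qed.

Lemma MND_rp n (pi : 'S_n) : MND (rp pi) = MNA pi.
Proof.
rewrite /MNA /MND (reindex_inj (imset_inj (@fl_inj n))) /=.
apply: eq_big => [I|I _]; last by rewrite card_imset //; exact: fl_inj.
rewrite forall_imset.
have -> : [forall i in I, is_des (rp pi) (fl i)] = [forall i in I, is_asc pi i].
  by apply: eq_forallb => i; rewrite des_rp flK.
case E: [forall i in I, is_asc pi i] => //=.
apply: nonadj_fl => i iI; apply: (@asc_lt n pi).
exact: (implyP (forallP E i) iI).
Qed.

Lemma ascr n (pi : 'S_n) : asc (rp pi) = des pi.
Proof.
rewrite /asc /des -(card_rp (fun i => is_des pi i)); apply: eq_card => i.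
by rewrite !inE asc_rp.
Qed.

Lemma desr n (pi : 'S_n) : des (rp pi) = asc pi.
Proof.
rewrite /asc /des -(card_rp (fun i => is_asc pi i)); apply: eq_card => i.
by rewrite !inE des_rp.
Qed.

Local Open Scope ring_scope.

Theorem theorem14 (R : comNzRingType) (n : nat) (t1 t2 t3 t4 : R) :
  \sum_(pi in av213_312 n)
     t1 ^+ asc pi * t2 ^+ des pi * t3 ^+ MNA pi * t4 ^+ MND pi =
  \sum_(pi in av213_312 n)
     t1 ^+ des pi * t2 ^+ asc pi * t3 ^+ MND pi * t4 ^+ MNA pi.
Proof.
rewrite (reindex_inj (mulgI (rr n))) /=.
apply: eq_big => [pi|pi _]; first exact: mem_rp.
by rewrite -/(rp pi) ascr desr MNA_rp MND_rp.
Qed.
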